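(* Let $G$ be a CDF and define $r(v,b,\alpha)=(v-b)G(b)+\alpha\int_0^bG(y)\,dy$. Then $b^*(v,\alpha)=\arg\max_b r(v,b,\alpha)$, taking the largest maximizer in case of a tie, is a non-decreasing function of $v$ and a non-decreasing function of $\alpha$.
   Context: Here $G$ is the distribution of the highest competing bid in a repeated non-credible second-price auction, $v\in[0,1]$ is the bidder's value, $b\ge 0$ is a bid and $\alpha\in[0,1]$ is the seller's credibility parameter; $r(v,b,\alpha)$ is the bidder's expected reward when bidding $b$ with value $v$ and the winner pays $\alpha d+(1-\alpha)b$, $d\sim G$. *)

(* Defs.v *)
From Stdlib Require Import Reals.
From Coquelicot Require Import Coquelicot.
Open Scope R_scope.

Definition is_cdf (G : R -> R) : Prop :=
  (forall x y, x <= y -> G x <= G y) /\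
  (forall x, filterlim G (at_right x) (locally (G x))) /\
  filterlim G (Rbar_locally m_infty) (locally 0) /\
  filterlim G (Rbar_locally p_infty) (locally 1).

(* r(v,b,alpha) = (v - b) G(b) + alpha * int_0^b G(y) dy
   (G is monotone, hence Riemann integrable on [0,b], so RInt is the integral). *)
Definition reward (G : R -> R) (v b alpha : R) : R :=
  (v - b) * G b + alpha * RInt G 0 b.

Definition is_largest_argmax (f : R -> R) (b : R) : Prop :=
  0 <= b /\
  (forall b', 0 <= b' -> f b' <= f b) /\
  (forall b', 0 <= b' -> f b' = f b -> b' <= b).

(* Main.v *)
Require Import Defs.
From Stdlib Require Import Reals Lra Lia.
From Coquelicot Require Import Coquelicot.
Open Scope R_scope.
Lemma ex_RInt_cst_on (h : R -> R) (a b k : R) :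
  (forall x, Rmin a b < x < Rmax a b -> h x = k) -> ex_RInt h a b.
Proof.
  intros H. apply ex_RInt_ext with (f := fun _ => k).
  - intros x Hx. symmetry. apply H; exact Hx.
  - apply ex_RInt_const.
Qed.

Lemma ex_RInt_step01 (h : R -> R) (a b : R) : a <= b ->
  (forall x y, x <= y -> h x <= h y) -> (forall x, h x = 0 \/ h x = 1) ->
  ex_RInt h a b.
Proof.
  intros Hab Hm H01.
  destruct (H01 b) as [Hb|Hb].
  { apply ex_RInt_cst_on with 0. intros x Hx.
    rewrite Rmin_left in Hx by lra. rewrite Rmax_right in Hx by lra.
    destruct (H01 x) as [E|E]; auto. assert (h x <= h b) by (apply Hm; lra). lra. }
  destruct (H01 a) as [Ha|Ha].
  2:{ apply ex_RInt_cst_on with 1. intros x Hx.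
    rewrite Rmin_left in Hx by lra. rewrite Rmax_right in Hx by lra.
    destruct (H01 x) as [E|E]; auto. assert (h a <= h x) by (apply Hm; lra). lra. }
  set (E := fun x => x <= b /\ h x = 0).
  destruct (completeness E) as [c [Hub Hlub]].
  { exists b. intros x [Hx _]. exact Hx. }
  { exists a. split; auto. }
  assert (Hac : a <= c) by (apply Hub; split; auto).
  assert (Hcb : c <= b) by (apply Hlub; intros x [Hx _]; exact Hx).
  apply ex_RInt_Chasles with c.
  - apply ex_RInt_cst_on with 0. intros x Hx.
    rewrite Rmin_left in Hx by lra. rewrite Rmax_right in Hx by lra.
    destruct (H01 x) as [E0|E0]; auto. exfalso.
    assert (c <= x); [|lra].
    apply Hlub. intros y [Hy1 Hy2].
    destruct (Rle_lt_dec y x) as [L|L]; auto.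
    assert (h x <= h y) by (apply Hm; lra). lra.
  - apply ex_RInt_cst_on with 1. intros x Hx.
    rewrite Rmin_left in Hx by lra. rewrite Rmax_right in Hx by lra.
    destruct (H01 x) as [E0|E0]; auto. exfalso.
    assert (x <= c) by (apply Hub; split; [lra|auto]). lra.
Qed.
Lemma approx (a b d : R) (Hab : a <= b) (Hd : 0 < d) (N : nat) :
  forall (g : R -> R) (m : R), (forall x y, x <= y -> g x <= g y) ->
  (forall x, m <= g x <= m + INR N * d) ->
  {f : R -> R | ex_RInt f a b /\ forall x, m <= f x /\ f x <= g x /\ g x <= f x + d}.
Proof.
  induction N as [|n IH]; intros g m Hg Hb.
  - exists (fun _ => m). split; [apply ex_RInt_const|].
    intros x. specialize (Hb x). simpl in Hb. lra.
  - set (c := m + d).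
    destruct (IH (fun x => Rmax (g x) c) c) as [f1 [Hi1 Hf1]].
    { intros x y Hxy. assert (g x <= g y) by (apply Hg; auto).
      unfold Rmax; destruct (Rle_dec (g x) c); destruct (Rle_dec (g y) c); lra. }
    { intros x. specialize (Hb x). rewrite S_INR in Hb. unfold c.
      pose proof (pos_INR n). unfold Rmax; destruct (Rle_dec (g x) (m+d)); nra. }
    exists (fun x => f1 x - d + d * (if Rlt_dec (g x) c then 0 else 1)).
    split.
    + eapply ex_RInt_ext; [ | apply (@ex_RInt_plus R_NormedModule (fun y => minus (f1 y) d)
          (fun y => scal d (if Rlt_dec (g y) c then 0 else 1)))].
      { intros x _. cbn. unfold minus, plus, opp, scal; simpl. unfold mult; simpl. ring. }
      * apply (@ex_RInt_minus R_NormedModule); [exact Hi1| apply ex_RInt_const].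
      * apply (@ex_RInt_scal R_NormedModule). apply ex_RInt_step01; auto.
        -- intros x y Hxy. assert (g x <= g y) by (apply Hg; auto).
           destruct (Rlt_dec (g x) c); destruct (Rlt_dec (g y) c); lra.
        -- intros x. destruct (Rlt_dec (g x) c); auto.
    + intros x. specialize (Hf1 x). specialize (Hb x).
      unfold Rmax in Hf1. destruct (Rlt_dec (g x) c) as [L|L];
      destruct (Rle_dec (g x) c); unfold c in *; lra.
Qed.
Lemma ex_RInt_mono (G : R -> R) (a b : R) : a <= b ->
  (forall x y, x <= y -> G x <= G y) -> (forall x, 0 <= G x <= 1) -> ex_RInt G a b.
Proof.
  intros Hab Hm H01.
  assert (Hd : forall n : nat, 0 < / (INR n + 1)).
  { intros n. apply Rinv_0_lt_compat. pose proof (pos_INR n). lra. }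
  assert (Hb : forall n x, 0 <= G x <= 0 + INR (S n) * / (INR n + 1)).
  { intros n x. rewrite S_INR. rewrite Rinv_r by (pose proof (pos_INR n); lra).
    specialize (H01 x). lra. }
  set (f := fun n => proj1_sig (approx a b _ Hab (Hd n) (S n) G 0 Hm (Hb n))).
  assert (Hf : forall n, ex_RInt (f n) a b /\ forall x, 0 <= f n x /\ f n x <= G x /\ G x <= f n x + / (INR n + 1)).
  { intros n. unfold f. destruct (approx _ _ _ _ _ _ _ _ _ _) as [g Hg]. exact Hg. }
  destruct (filterlim_RInt (U := nat) (V := R_CompleteNormedModule) f a b eventually eventually_filter
     G (fun n => RInt (f n) a b)) as [If [_ HI]].
  - intros n. apply (RInt_correct (V := R_CompleteNormedModule)). apply Hf.
  - apply filterlim_locally. intros eps.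
    destruct (archimed_cor1 eps (cond_pos eps)) as [N [HN HN0]].
    exists N. intros n Hn. intros t. 
    destruct (Hf n) as [_ H]. specialize (H t).
    assert (/ (INR n + 1) < / INR N).
    { apply Rinv_lt_contravar. apply Rmult_lt_0_compat. apply lt_0_INR; lia.
      pose proof (pos_INR n); lra. apply le_INR in Hn. lra. }
    change (Rabs (f n t - G t) < eps).
    rewrite Rabs_left1 by lra. lra.
  - exists If. exact HI.
Qed.
Lemma cdf_bounds (G : R -> R) : is_cdf G -> forall x, 0 <= G x <= 1.
Proof.
  intros [Hm [_ [Hl Hu]]] x. split.
  - destruct (Rle_lt_dec 0 (G x)) as [L|L]; auto. exfalso.
    destruct (Hl _ (locally_ball 0 (mkposreal _ (Ropp_0_gt_lt_contravar _ L)))) as [M HM].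
    set (y := Rmin x (M - 1)).
    specialize (HM y). assert (y < M) by (unfold y; pose proof (Rmin_r x (M-1)); lra).
    specialize (HM H). change (Rabs (G y - 0) < - G x) in HM.
    assert (G y <= G x) by (apply Hm; apply Rmin_l).
    rewrite Rabs_left1 in HM by lra. lra.
  - destruct (Rle_lt_dec (G x) 1) as [L|L]; auto. exfalso.
    assert (P : 0 < G x - 1) by lra.
    destruct (Hu _ (locally_ball 1 (mkposreal _ P))) as [M HM].
    set (y := Rmax x (M + 1)).
    specialize (HM y). assert (M < y) by (unfold y; pose proof (Rmax_r x (M+1)); lra).
    specialize (HM H). change (Rabs (G y - 1) < G x - 1) in HM.
    assert (G x <= G y) by (apply Hm; apply Rmax_l).
    rewrite Rabs_right in HM by lra. lra.
Qed.

Lemma mcs (f1 f2 : R -> R) b1 b2 :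
  is_largest_argmax f1 b1 -> is_largest_argmax f2 b2 ->
  (forall x y, 0 <= x -> x <= y -> f2 x - f1 x <= f2 y - f1 y) -> b1 <= b2.
Proof.
  intros [H10 [H1m _]] [H20 [H2m H2l]] HD.
  destruct (Rle_lt_dec b1 b2) as [L|L]; auto. exfalso.
  assert (f1 b2 <= f1 b1) by (apply H1m; auto).
  assert (f2 b2 - f1 b2 <= f2 b1 - f1 b1) by (apply HD; lra).
  assert (f2 b1 <= f2 b2) by (apply H2m; lra).
  assert (b1 <= b2) by (apply H2l; lra). lra.
Qed.

Theorem lemma3 (G : R -> R) (HG : is_cdf G) :
  (forall (alpha v1 v2 b1 b2 : R),
      0 <= alpha <= 1 -> 0 <= v1 -> v1 <= v2 -> v2 <= 1 ->
      is_largest_argmax (fun b => reward G v1 b alpha) b1 ->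
      is_largest_argmax (fun b => reward G v2 b alpha) b2 ->
      b1 <= b2) /\
  (forall (v alpha1 alpha2 b1 b2 : R),
      0 <= v <= 1 -> 0 <= alpha1 -> alpha1 <= alpha2 -> alpha2 <= 1 ->
      is_largest_argmax (fun b => reward G v b alpha1) b1 ->
      is_largest_argmax (fun b => reward G v b alpha2) b2 ->
      b1 <= b2).
Proof.
  pose proof (cdf_bounds G HG) as HB.
  destruct HG as [Hm _].
  split.
  - intros alpha v1 v2 b1 b2 _ _ Hv _ H1 H2.
    apply (mcs _ _ _ _ H1 H2). intros x y _ Hxy. unfold reward.
    assert (G x <= G y) by (apply Hm; auto).
    assert ((v2 - v1) * G x <= (v2 - v1) * G y) by (apply Rmult_le_compat_l; lra).
    lra.
  - intros v a1 a2 b1 b2 _ _ Ha _ H1 H2.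
    apply (mcs _ _ _ _ H1 H2). intros x y Hx Hxy. unfold reward.
    assert (I1 : ex_RInt G 0 x) by (apply ex_RInt_mono; auto).
    assert (I2 : ex_RInt G x y) by (apply ex_RInt_mono; auto).
    pose proof (RInt_Chasles G 0 x y I1 I2) as HC.
    assert (0 <= RInt G x y) by (apply RInt_ge_0; auto; intros; apply HB).
    change (RInt G 0 x + RInt G x y = RInt G 0 y) in HC.
    assert ((a2 - a1) * RInt G 0 x <= (a2 - a1) * RInt G 0 y) by (apply Rmult_le_compat_l; lra).
    lra.
Qed.
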